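(* Let $\Lambda=(W_j,\Lambda_j,v_j)_{j\in\mathbb{J}}$ be a Parseval g-fusion frame for $H$, let $\mathbb{I}\subseteq\mathbb{J}$, $\mathbb{I}^c=\mathbb{J}\setminus\mathbb{I}$, and for $\mathbb{K}\subseteq\mathbb{J}$ set $S_{\mathbb{K}}f:=\sum_{j\in\mathbb{K}}v_j^2\pi_{W_j}\Lambda_j^*\Lambda_j\pi_{W_j}f$. Then, in the order of self-adjoint operators, (I) $0\le S_{\mathbb{I}}-S_{\mathbb{I}}^2\le\frac14 id_H$; (II) $\frac12 id_H\le S_{\mathbb{I}}^2+S_{\mathbb{I}^c}^2\le\frac32 id_H$.
   Context: $H$ is a separable Hilbert space, $\mathbb{J}\subseteq\mathbb{Z}$, $\{H_j\}_{j\in\mathbb{J}}$ are separable Hilbert spaces, $\Lambda_j\in\mathcal{B}(H,H_j)$, $W_j$ are closed subspaces of $H$, $v_j>0$, and $\pi_V$ denotes the orthogonal projection onto a closed subspace $V$. The triple $\Lambda=(W_j,\Lambda_j,v_j)$ is a Parseval g-fusion frame for $H$ if $\sum_{j\in\mathbb{J}}v_j^2\Vert\Lambda_j\pi_{W_j}f\Vert^2=\Vert f\Vert^2$ for all $f\in H$. $T\le U$ means $\langle Tf,f\rangle\le\langle Uf,f\rangle$ for all $f$. *)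

(* Defs.v *)
From HB Require Import structures.
From mathcomp Require Import all_boot all_order all_algebra.
From mathcomp Require Import complex.
From mathcomp Require Import reals.
From Stdlib Require Import ClassicalEpsilon.
Set Implicit Arguments. Unset Strict Implicit. Unset Printing Implicit Defensive.
Import Order.TTheory GRing.Theory Num.Theory.
Local Open Scope ring_scope.
Local Open Scope complex_scope.

Section Hilbert.
Variable R : realType.
Local Notation C := R[i].
Variable H : lmodType C.
Variable ip : H -> H -> C.

(* inner product: linear in the first argument, conjugate symmetric,
   positive definite (the order on C is x <= y iff y - x is real >= 0) *)
Definition is_inner_product :=
  [/\ forall (a : C) (x y z : H), ip (a *: x + y) z = a * ip x z + ip y z,
      forall x y : H, ip y x = (ip x y)^*,
      forall x : H, 0 <= ip x x
    & forall x : H, ip x x = 0 -> x = 0].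

Definition hnorm (x : H) : R := Num.sqrt (complex.Re (ip x x)).

Definition converges (u : nat -> H) (l : H) :=
  forall e : R, 0 < e -> exists N : nat, forall n, (N <= n)%N -> hnorm (u n - l) < e.

Definition cauchy (u : nat -> H) :=
  forall e : R, 0 < e -> exists N : nat, forall n m, (N <= n)%N -> (N <= m)%N ->
    hnorm (u n - u m) < e.

Definition complete := forall u, cauchy u -> exists l, converges u l.

Definition separable :=
  exists d : nat -> H, forall (f : H) (e : R), 0 < e -> exists n, hnorm (f - d n) < e.

Definition is_hilbert := is_inner_product /\ complete.

(* the limit of a sequence (an arbitrary value if it does not converge) *)
Definition hlim (u : nat -> H) : H := epsilon (inhabits 0) (converges u).

Definition closed_subspace (W : H -> Prop) :=
  [/\ W 0,
      forall (a : C) (x y : H), W x -> W y -> W (a *: x + y)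
    & forall (u : nat -> H) (l : H), (forall n, W (u n)) -> converges u l -> W l].

Definition is_orth_proj (W : H -> Prop) (P : H -> H) :=
  forall f : H, W (P f) /\ forall w : H, W w -> ip (f - P f) w = 0.

Definition op_le (T U : H -> H) := forall f : H, ip (T f) f <= ip (U f) f.

End Hilbert.

Definition bounded (R : realType) (H K : lmodType R[i])
  (ipH : H -> H -> R[i]) (ipK : K -> K -> R[i]) (A : H -> K) :=
  exists c : R, forall f : H, hnorm ipK (A f) <= c * hnorm ipH f.

Definition is_adjoint (R : realType) (H K : lmodType R[i])
  (ipH : H -> H -> R[i]) (ipK : K -> K -> R[i]) (A : H -> K) (B : K -> H) :=
  forall (f : H) (g : K), ipK (A f) g = ipH f (B g).

Definition zwin (n : nat) : seq int := [seq (i%:Z - n%:Z)%R | i <- iota 0 (n + n).+1].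

(* sum over an index set K ⊆ Z of nonnegative reals equals s
   (terms are nonnegative, so the symmetric partial sums suffice) *)
Definition real_series_to (R : realType) (K : {pred int}) (a : int -> R) (s : R) :=
  forall e : R, 0 < e -> exists N : nat, forall n, (N <= n)%N ->
    `|(\sum_(j <- zwin n | j \in K) a j) - s| < e.

Definition hsum (R : realType) (H : lmodType R[i]) (ip : H -> H -> R[i])
  (K : {pred int}) (x : int -> H) : H :=
  hlim ip (fun n => \sum_(j <- zwin n | j \in K) x j).

(* Parseval g-fusion frame (W_j, Lam_j, v_j)_{j in J}; P j = pi_{W_j} *)
Definition parseval_gfusion (R : realType) (H : lmodType R[i]) (ip : H -> H -> R[i])
  (J : {pred int}) (Hj : int -> lmodType R[i]) (ipj : forall j, Hj j -> Hj j -> R[i])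
  (Lam : forall j, H -> Hj j) (P : int -> H -> H) (v : int -> R) :=
  forall f : H, real_series_to J (fun j => v j ^+ 2 * hnorm (ipj j) (Lam j (P j f)) ^+ 2)
                                  (hnorm ip f ^+ 2).

Definition S_op (R : realType) (H : lmodType R[i]) (ip : H -> H -> R[i])
  (Hj : int -> lmodType R[i]) (Lam : forall j, H -> Hj j) (Lams : forall j, Hj j -> H)
  (P : int -> H -> H) (v : int -> R) (K : {pred int}) (f : H) : H :=
  hsum ip K (fun j => (v j ^+ 2)%:C *: P j (Lams j (Lam j (P j f)))).

(* Main.v *)
Require Import Defs.
From HB Require Import structures.
From mathcomp Require Import all_boot all_order all_algebra.
From mathcomp Require Import complex reals.
From Stdlib Require Import ClassicalEpsilon.
From mathcomp Require Import ring lra zify.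
Set Implicit Arguments. Unset Strict Implicit. Unset Printing Implicit Defensive.
Import Order.TTheory GRing.Theory Num.Theory.
Local Open Scope ring_scope.
Local Open Scope complex_scope.
Local Notation Re := complex.Re.
Local Notation Im := complex.Im.

Section Cplx.
Variable R : realType.
Lemma ReD (x y : R[i]) : Re (x + y) = Re x + Re y.
Proof. by case: x => a b; case: y. Qed.
Lemma Re0 : Re (0 : R[i]) = 0. Proof. by []. Qed.
Lemma Re_sum (I : Type) (r : seq I) (Q : pred I) (F : I -> R[i]) :
  Re (\sum_(j <- r | Q j) F j) = \sum_(j <- r | Q j) Re (F j).
Proof. exact: (big_morph _ ReD Re0). Qed.
Lemma ReJ (x : R[i]) : Re (x^*) = Re x. Proof. by case: x. Qed.
Lemma ReRM (a : R) (x : R[i]) : Re (a%:C * x) = a * Re x.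
Proof. case: x => p q /=. ring. Qed.
Lemma c_eq (x y : R[i]) : Re x = Re y -> Im x = Im y -> x = y.
Proof. by case: x => a b; case: y => c d /= -> ->. Qed.
Lemma Im_as_Re (x : R[i]) : Im x = Re (- 'i * x).
Proof. case: x => a b /=. ring. Qed.
Lemma ReJJ (c w : R[i]) : Re (c^* * w^*) = Re (c * w).
Proof. by rewrite -rmorphM ReJ. Qed.
Lemma real_C (x : R[i]) : Im x = 0 -> x = (Re x)%:C.
Proof. by case: x => a b /= ->. Qed.
End Cplx.

Section IP.
Variable R : realType.
Variable H : lmodType R[i].
Variable ip : H -> H -> R[i].
Hypothesis Hip : is_inner_product ip.

Lemma ipDl x y z : ip (x + y) z = ip x z + ip y z.
Proof. by case: Hip => h _ _ _; rewrite -(scale1r x) h mul1r scale1r. Qed.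
Lemma ip0l z : ip 0 z = 0.
Proof. by apply: (@addrI _ (ip 0 z)); rewrite addr0 -ipDl addr0. Qed.
Lemma ipZl a x z : ip (a *: x) z = a * ip x z.
Proof. by case: Hip => h _ _ _; rewrite -(addr0 (a *: x)) h ip0l addr0. Qed.
Lemma ipNl x z : ip (- x) z = - ip x z.
Proof. by rewrite -scaleN1r ipZl mulN1r. Qed.
Lemma ipBl x y z : ip (x - y) z = ip x z - ip y z.
Proof. by rewrite ipDl ipNl. Qed.
Lemma ipC x y : ip y x = (ip x y)^*.
Proof. by case: Hip => _ h _ _; rewrite h. Qed.
Lemma ipZr a x z : ip x (a *: z) = a^* * ip x z.
Proof. by rewrite ipC ipZl rmorphM /= -ipC. Qed.
Lemma ip_suml (I : Type) (r : seq I) (Q : pred I) (F : I -> H) z :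
  ip (\sum_(j <- r | Q j) F j) z = \sum_(j <- r | Q j) ip (F j) z.
Proof. exact: (big_morph (fun x => ip x z) (fun x y => ipDl x y z) (ip0l z)). Qed.
Lemma ip0r z : ip z 0 = 0.
Proof. by rewrite ipC ip0l conjc0. Qed.

Definition nr x := Re (ip x x).
Definition rip x y := Re (ip x y).

Lemma nr_ge0 x : 0 <= nr x.
Proof. by case: Hip => _ _ h _; move: (h x); rewrite /nr lecE => /andP[]. Qed.
Lemma ipxx x : ip x x = (nr x)%:C.
Proof. apply: real_C; case: Hip => _ _ h _; exact: ger0_Im. Qed.
Lemma hnorm_sq x : hnorm ip x ^+ 2 = nr x.
Proof. by rewrite /hnorm sqr_sqrtr // nr_ge0. Qed.
Lemma hnorm_ge0 x : 0 <= hnorm ip x.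
Proof. exact: sqrtr_ge0. Qed.
Lemma nr0 x : nr x = 0 -> x = 0.
Proof. by case: Hip => _ _ _ h => e; apply: h; rewrite ipxx e. Qed.

Lemma ripDl x y z : rip (x + y) z = rip x z + rip y z.
Proof. by rewrite /rip ipDl ReD. Qed.
Lemma ripC x y : rip x y = rip y x.
Proof. by rewrite /rip ipC ReJ. Qed.
Lemma ripRl (t : R) x z : rip (t%:C *: x) z = t * rip x z.
Proof. by rewrite /rip ipZl ReRM. Qed.
Lemma ripDr x y z : rip z (x + y) = rip z x + rip z y.
Proof. by rewrite ripC ripDl !(ripC z). Qed.
Lemma ripRr (t : R) x z : rip z (t%:C *: x) = t * rip z x.
Proof. by rewrite ripC ripRl ripC. Qed.
Lemma ripNl x z : rip (- x) z = - rip x z.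
Proof. by rewrite /rip ipNl; case: (ip x z). Qed.

Lemma CS_sq x y : rip x y ^+ 2 <= nr x * nr y.
Proof.
have [|] := eqVneq (nr y) 0.
  by move=> y0; rewrite y0 mulr0 (nr0 y0) /rip ip0r expr0n.
move=> ny; have py : 0 < nr y by rewrite lt_def ny nr_ge0.
set c := rip x y; set t := - (c / nr y).
have := nr_ge0 (x + t%:C *: y).
rewrite /nr -/(rip _ _) ripDl !ripDr !ripRl !ripRr -!/(nr _) (ripC y x) -/c.
rewrite /t => h; change (rip x x) with (nr x) in h; change (rip y y) with (nr y) in h.
have e : c / nr y * nr y = c by rewrite divfK.
move: (c / nr y) e h => d e h.
nra.
Qed.

Lemma CS x y : rip x y <= hnorm ip x * hnorm ip y.
Proof.
have := CS_sq x y; rewrite -!hnorm_sq -exprMn.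
have := mulr_ge0 (hnorm_ge0 x) (hnorm_ge0 y).
move: (_ * _) => p; nra.
Qed.
Lemma CS_abs x y : `|rip x y| <= hnorm ip x * hnorm ip y.
Proof.
have := CS_sq x y; rewrite -!hnorm_sq -exprMn.
have := mulr_ge0 (hnorm_ge0 x) (hnorm_ge0 y).
move: (_ * _) => p.
case: (ler0P (rip x y)) => _; nra.
Qed.
End IP.

Section RConv.
Variable R : realType.
Definition rconv (u : nat -> R) (a : R) :=
  forall e : R, 0 < e -> exists N : nat, forall n, (N <= n)%N -> `|u n - a| < e.

Lemma rconv_uniq u a b : rconv u a -> rconv u b -> a = b.
Proof.
move=> ha hb; apply/eqP; rewrite -subr_eq0; apply/negPn/negP => nz.
have e0 : 0 < `|a - b| / 2 by rewrite divr_gt0 // normr_gt0.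
have [N1 h1] := ha _ e0; have [N2 h2] := hb _ e0.
have := h1 (maxn N1 N2) (leq_maxl _ _); have := h2 (maxn N1 N2) (leq_maxr _ _).
move: (u _) => x; rewrite !ltr_norml => /andP[p1 p2] /andP[q1 q2].
have : `|a - b| = a - b \/ `|a - b| = - (a - b).
  by case: (ler0P (a - b)) => h; [right|left].
move: e0 p1 p2 q1 q2; move: (`|a - b|) => d; lra.
Qed.

Lemma rconvD u w a b : rconv u a -> rconv w b -> rconv (fun n => u n + w n) (a + b).
Proof.
move=> ha hb e e0.
have e2 : 0 < e / 2 by rewrite divr_gt0.
have [N1 h1] := ha _ e2; have [N2 h2] := hb _ e2.
exists (maxn N1 N2) => n hn.
have := h1 n (leq_trans (leq_maxl _ _) hn); have := h2 n (leq_trans (leq_maxr _ _) hn).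
have -> : u n + w n - (a + b) = u n - a + (w n - b) by ring.
move=> p q; apply: (le_lt_trans (ler_normD _ _)).
move: p q; move: `|_| `|_| => p q; lra.
Qed.

Lemma rconv_ext u w a : (forall n, u n = w n) -> rconv u a -> rconv w a.
Proof. by move=> h ha e e0; have [N hN] := ha e e0; exists N => n; rewrite -h; apply: hN. Qed.

Lemma rconv_const c : rconv (fun _ => c) c.
Proof. by move=> e e0; exists 0%N => n _; rewrite subrr normr0. Qed.

Lemma rconv_le u a c : (forall n, u n <= c) -> rconv u a -> a <= c.
Proof.
move=> hu ha; rewrite leNgt; apply/negP => ca.
have [|N hN] := ha (a - c); first by rewrite subr_gt0.
have := hN N (leqnn _); have := hu N; move: (u N) => x.
move=> h0; rewrite ltr_norml => /andP[p1 p2]; lra.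
Qed.

Lemma rconv_mono u a n : (forall n d, u n <= u (n + d)%N) -> rconv u a -> u n <= a.
Proof.
move=> hu ha; rewrite leNgt; apply/negP => ca.
have [|N hN] := ha (u n - a); first by rewrite subr_gt0.
have := hN (n + N)%N (leq_addl _ _); have := hu n N; move: (u (n + N)%N) => x.
move=> h0; rewrite ltr_norml => /andP[p1 p2]; lra.
Qed.
End RConv.

Section Lim.
Variable R : realType.
Variable H : lmodType R[i].
Variable ip : H -> H -> R[i].
Hypothesis Hip : is_inner_product ip.

Lemma Re_ip c z g : Re (c * ip z g) = rip ip z (c^* *: g).
Proof. by rewrite /rip (ipZr Hip) conjCK. Qed.

Lemma lim_ip u x g c : converges ip u x ->
  rconv (fun n => Re (c * ip (u n) g)) (Re (c * ip x g)).
Proof.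
move=> hc e e0.
set g' := c^* *: g.
have k0 : 0 < hnorm ip g' + 1 by have := hnorm_ge0 ip g'; lra.
have [|N hN] := hc (e / (hnorm ip g' + 1)); first by rewrite divr_gt0.
exists N => n /hN h.
rewrite !Re_ip.
have -> : rip ip (u n) g' - rip ip x g' = rip ip (u n - x) g'.
  by rewrite (ripDl Hip) (ripNl Hip).
apply: (le_lt_trans (CS_abs Hip _ _)).
have hg := hnorm_ge0 ip g'; have hu := hnorm_ge0 ip (u n - x).
have ee : e / (hnorm ip g' + 1) * (hnorm ip g' + 1) = e by rewrite divfK // gt_eqF.
move: (e / _) h ee => d h ee.
nra.
Qed.
End Lim.

Lemma zwinS n : zwin n.+1 = (- (n.+1)%:Z) :: rcons (zwin n) (n.+1)%:Z.
Proof.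
rewrite /zwin -cats1.
have -> : ((n.+1 + n.+1).+1 = 1 + ((n + n).+1 + 1))%N by lia.
rewrite !iotaD !map_cat /= add0n.
rewrite (iotaDl 1 1) -map_comp.
congr [:: _, _ & _ ++ [:: _]]; try lia.
by apply: eq_map => k /=; lia.
Qed.

Definition rr n d : seq int := flatten [seq [:: - (k.+1)%:Z; (k.+1)%:Z] | k <- iota n d].

Lemma zwin_split n d : perm_eq (zwin (n + d)) (zwin n ++ rr n d).
Proof.
elim: d => [|d IH]; first by rewrite addn0 /rr /= cats0.
have E : iota n d.+1 = iota n d ++ [:: (n + d)%N] by rewrite -addn1 iotaD.
rewrite addnS zwinS /rr E map_cat flatten_cat -/(rr n d).
apply/permP => p; have := permP IH p.
rewrite -cats1.
move: (zwin (n + d)) (zwin n) (rr n d) => z1 z2 z3.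
rewrite /= !count_cat /= => ->; lia.
Qed.

Lemma sum_split (V : nmodType) (Q : pred int) (F : int -> V) n d :
  \sum_(j <- zwin (n + d) | Q j) F j =
  \sum_(j <- zwin n | Q j) F j + \sum_(j <- rr n d | Q j) F j.
Proof. by rewrite (perm_big _ (zwin_split n d)) big_cat. Qed.

Lemma ReJ2 (R : realType) (c w : R[i]) : Re (c * w^*) = Re (c^* * w).
Proof. by rewrite -ReJ rmorphM /= conjcK. Qed.

Lemma sub_sum (R : realType) (K J : {pred int}) (r : seq int) (c : int -> R) :
  {subset K <= J} -> (forall j, 0 <= c j) ->
  \sum_(j <- r | j \in K) c j <= \sum_(j <- r | j \in J) c j.
Proof.
move=> KJ c0; rewrite big_mkcond [X in _ <= X]big_mkcond /=.
apply: ler_sum => j _; case: ifP => jK; first by rewrite (KJ _ jK).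
by case: ifP.
Qed.

Unset Implicit Arguments.
Section Frame.
Variable R : realType.
Variable H : lmodType R[i].
Variable ip : H -> H -> R[i].
Hypothesis Hip : is_inner_product ip.
Hypothesis Hcomp : complete ip.
Variable J : {pred int}.
Variable Hj : int -> lmodType R[i].
Variable ipj : forall j, Hj j -> Hj j -> R[i].
Hypothesis HHj : forall j, j \in J -> is_inner_product (ipj j).
Variable Lam : forall j, H -> Hj j.
Variable Lams : forall j, Hj j -> H.
Hypothesis Hadj : forall j, j \in J -> is_adjoint ip (ipj j) (Lam j) (Lams j).
Variable W : int -> H -> Prop.
Variable P : int -> H -> H.
Hypothesis HP : forall j, j \in J -> is_orth_proj ip (W j) (P j).
Variable v : int -> R.
Hypothesis Hframe : parseval_gfusion ip J ipj Lam P v.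

Definition t j f := (v j ^+ 2)%:C *: P j (Lams j (Lam j (P j f))).
Definition b j f := v j * hnorm (ipj j) (Lam j (P j f)).

Lemma P_sym j u g : j \in J -> ip (P j u) g = ip u (P j g).
Proof.
move=> jJ; have [_ hu] := HP j jJ u; have [hg _] := HP j jJ g.
have [hu' _] := HP j jJ u; have [_ hg'] := HP j jJ g.
have e1 := hu _ hg; rewrite (ipBl Hip) in e1.
have e2 := hg' _ hu'; rewrite (ipBl Hip) in e2.
have -> : ip u (P j g) = ip (P j u) (P j g) by apply/eqP; rewrite -subr_eq0 e1.
have -> : ip (P j u) g = (ip g (P j u))^* by rewrite -(ipC Hip).
have -> : ip g (P j u) = ip (P j g) (P j u) by apply/eqP; rewrite -subr_eq0 e2.
by rewrite -(ipC Hip).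
Qed.

Lemma t_ip j f g : j \in J ->
  ip (t j f) g = (v j ^+ 2)%:C * ipj j (Lam j (P j f)) (Lam j (P j g)).
Proof.
move=> jJ; rewrite /t (ipZl Hip) P_sym // (ipC Hip) -(Hadj j jJ).
by rewrite -(ipC (HHj j jJ)).
Qed.

Lemma t_sym j f g : j \in J -> ip (t j g) f = (ip (t j f) g)^*.
Proof.
move=> jJ; rewrite !t_ip //; move: (v j ^+ 2) => a; rewrite rmorphM /= oppr0 -(ipC (HHj j jJ)).
done.
Qed.

Lemma t_ff j f : j \in J -> ip (t j f) f = (b j f ^+ 2)%:C.
Proof.
move=> jJ; rewrite t_ip // (ipxx (HHj j jJ)) -rmorphM /b exprMn.
by rewrite -/(hnorm _ _) (hnorm_sq (HHj j jJ)).
Qed.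

Lemma t_rip j f g : j \in J -> rip ip (t j f) g <= b j f * b j g.
Proof.
move=> jJ; rewrite /rip t_ip // ReRM.
have := CS (HHj j jJ) (Lam j (P j f)) (Lam j (P j g)).
rewrite /b /rip => h.
rewrite mulrACA -expr2; apply: ler_wpM2l => //; exact: sqr_ge0.
Qed.

Definition ps (r : seq int) (K : {pred int}) f := \sum_(j <- r | j \in K) t j f.

Lemma key (K : {pred int}) (r : seq int) f : {subset K <= J} ->
  \sum_(j <- r | j \in J) b j (ps r K f) ^+ 2 <= nr ip (ps r K f) ->
  nr ip (ps r K f) <= \sum_(j <- r | j \in K) b j f ^+ 2.
Proof.
move=> KJ; set g := ps r K f => hB.
have e1 : nr ip g = \sum_(j <- r | j \in K) rip ip (t j f) g.
  by rewrite /nr {1}/g /ps (ip_suml Hip) Re_sum.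
have e2 : \sum_(j <- r | j \in K) rip ip (t j f) g <=
          \sum_(j <- r | j \in K) (b j f ^+ 2 / 2 + b j g ^+ 2 / 2).
  apply: ler_sum => j jK; apply: (le_trans (t_rip j f g (KJ _ jK))).
  have := sqr_ge0 (b j f - b j g); move: (b j f) (b j g) => x y; nra.
rewrite big_split /= -!mulr_suml in e2.
have e3 : \sum_(j <- r | j \in K) b j g ^+ 2 <= \sum_(j <- r | j \in J) b j g ^+ 2.
  by apply: sub_sum => // j; exact: sqr_ge0.
move: e1 e2 e3 hB; move: (nr ip g) (\sum_(j <- r | j \in K) rip ip (t j f) g)
  (\sum_(j <- r | j \in K) b j f ^+ 2) (\sum_(j <- r | j \in K) b j g ^+ 2)
  (\sum_(j <- r | j \in J) b j g ^+ 2) => a1 a2 a3 a4 a5; lra.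
Qed.

Definition pf g n := \sum_(j <- zwin n | j \in J) b j g ^+ 2.

Lemma parseval g : rconv (pf g) (nr ip g).
Proof.
have := Hframe g; rewrite /real_series_to (hnorm_sq Hip) => h.
apply: rconv_ext h => n; rewrite /pf; apply: eq_bigr => j _.
by rewrite /b exprMn.
Qed.

Lemma pf_ge0 g n : 0 <= pf g n.
Proof. by apply: sumr_ge0 => j _; exact: sqr_ge0. Qed.

Lemma pf_mono g n d : pf g n <= pf g (n + d).
Proof.
rewrite /pf sum_split lerDl; apply: sumr_ge0 => j _; exact: sqr_ge0.
Qed.

Lemma pf_le g n : pf g n <= nr ip g.
Proof. exact: rconv_mono (pf_mono g) (parseval g). Qed.


Lemma nr_opp x : nr ip (- x) = nr ip x.
Proof.
rewrite /nr -/(rip _ _ _) (ripNl Hip) (ripC Hip) (ripNl Hip) opprK.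
by [].
Qed.

Lemma hnorm_opp x : hnorm ip (- x) = hnorm ip x.
Proof.
by rewrite /hnorm; change (Num.sqrt (nr ip (- x)) = Num.sqrt (nr ip x)); rewrite nr_opp.
Qed.

Lemma ps_tail K f n d : {subset K <= J} ->
  nr ip (ps (zwin (n + d)) K f - ps (zwin n) K f) <= nr ip f - pf f n.
Proof.
move=> KJ.
have -> : ps (zwin (n + d)) K f - ps (zwin n) K f = ps (rr n d) K f.
  by rewrite /ps sum_split addrAC subrr add0r.
set g := ps (rr n d) K f.
have hk : nr ip g <= \sum_(j <- rr n d | j \in K) b j f ^+ 2.
  apply: key => //.
  have := pf_le g (n + d); have := pf_ge0 g n; rewrite /pf sum_split.
  move: (\sum_(j <- zwin n | j \in J) b j g ^+ 2) (\sum_(j <- rr n d | j \in J) b j g ^+ 2) => a1 a2.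
  lra.
have hs : \sum_(j <- rr n d | j \in K) b j f ^+ 2 <= \sum_(j <- rr n d | j \in J) b j f ^+ 2.
  by apply: sub_sum => // j; exact: sqr_ge0.
have := pf_le f (n + d); rewrite /pf sum_split.
move: hk hs; rewrite -/(pf f n).
move: (\sum_(j <- rr n d | j \in K) b j f ^+ 2) (\sum_(j <- rr n d | j \in J) b j f ^+ 2) => a1 a2.
lra.
Qed.

Lemma ps_cauchy K f : {subset K <= J} -> cauchy ip (fun n => ps (zwin n) K f).
Proof.
move=> KJ e e0.
have [|N hN] := parseval f (e ^+ 2); first by rewrite exprn_gt0.
have hNe : nr ip f - pf f N < e ^+ 2.
  have := hN N (leqnn _); have := pf_le f N.
  move: (pf f N) => a ha; rewrite ler0_norm ?subr_le0 //; lra.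
have aux : forall n m, (N <= n)%N -> (n <= m)%N ->
    hnorm ip (ps (zwin m) K f - ps (zwin n) K f) < e.
  move=> n m hn hm.
  have := ps_tail K f n (m - n) KJ; rewrite subnKC //.
  have := pf_mono f N (n - N); rewrite subnKC // => h1 h2.
  have h3 := hnorm_sq Hip (ps (zwin m) K f - ps (zwin n) K f).
  have h4 := hnorm_ge0 ip (ps (zwin m) K f - ps (zwin n) K f).
  move: h1 h2 h3 h4 hNe; move: (hnorm ip _) (nr ip _) (pf f n) (pf f N) (nr ip f) => a1 a2 a3 a4 a5.
  nra.
exists N => n m hn hm; case: (leqP n m) => hnm; first by rewrite -opprB hnorm_opp; exact: aux.
exact: aux (ltnW hnm).
Qed.

Local Notation S K f := (S_op ip Lam Lams P v K f).

Lemma S_conv K f : {subset K <= J} -> converges ip (fun n => ps (zwin n) K f) (S K f).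
Proof.
move=> KJ; rewrite /S_op /hsum /hlim; apply: epsilon_spec.
exact: Hcomp (ps_cauchy K f KJ).
Qed.

Lemma lim_sum K f g c : {subset K <= J} ->
  rconv (fun n => \sum_(j <- zwin n | j \in K) Re (c * ip (t j f) g)) (Re (c * ip (S K f) g)).
Proof.
move=> KJ; apply: rconv_ext (lim_ip Hip g c (S_conv K f KJ)) => n.
by rewrite /ps (ip_suml Hip) mulr_sumr Re_sum.
Qed.

Lemma S_real K f : {subset K <= J} -> ip (S K f) f = (rip ip (S K f) f)%:C.
Proof.
move=> KJ; apply: real_C.
have h := lim_sum K f f (- 'i) KJ.
have h0 : rconv (fun n => \sum_(j <- zwin n | j \in K) Re (- 'i * ip (t j f) f)) 0.
  apply: rconv_ext (rconv_const 0) => n; rewrite big1 // => j jK.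
  rewrite t_ff ?KJ //; move: (b j f ^+ 2) => a; rewrite /=; ring.
by rewrite Im_as_Re (rconv_uniq h h0).
Qed.

Lemma S_rip K f : {subset K <= J} ->
  rconv (fun n => \sum_(j <- zwin n | j \in K) b j f ^+ 2) (rip ip (S K f) f).
Proof.
move=> KJ; have h := lim_sum K f f 1 KJ; rewrite mul1r in h.
apply: rconv_ext h => n; apply: eq_bigr => j jK; rewrite mul1r t_ff ?KJ //.
Qed.

Lemma S_nr K f : {subset K <= J} -> nr ip (S K f) <= rip ip (S K f) f.
Proof.
move=> KJ; set x := S K f; set al := rip ip x f.
set q := fun n => \sum_(j <- zwin n | j \in K) b j f ^+ 2.
have hq : rconv q al := S_rip K f KJ.
have qm : forall n d, q n <= q (n + d)%N.
  move=> n d; rewrite /q sum_split lerDl; apply: sumr_ge0 => j _; exact: sqr_ge0.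
have hqa : forall n, q n <= al := fun n => rconv_mono n qm hq.
have al0 : 0 <= al by apply: le_trans (hqa 0%N); apply: sumr_ge0 => j _; exact: sqr_ge0.
have hu : forall n, nr ip (ps (zwin n) K f) <= q n.
  by move=> n; apply: key => //; exact: pf_le.
have hb : forall n, Re (1 * ip (ps (zwin n) K f) x) <= Num.sqrt al * hnorm ip x.
  move=> n; rewrite mul1r; apply: le_trans (CS Hip _ _) _.
  apply: ler_wpM2r; first exact: hnorm_ge0.
  exact: ler_wsqrtr (le_trans (hu n) (hqa n)).
have := rconv_le hb (lim_ip Hip x 1 (S_conv K f KJ)).
rewrite mul1r -/x; change (Re (ip x x)) with (nr ip x).
have h1 := hnorm_sq Hip x; have h2 := hnorm_ge0 ip x.
have h3 : Num.sqrt al ^+ 2 = al by rewrite sqr_sqrtr.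
have h4 := sqrtr_ge0 al.
move: h1 h2 h3 h4; move: (hnorm ip x) (Num.sqrt al) (nr ip x) => a1 a2 a3.
case: (lerP a1 a2) => h; nra.
Qed.

Lemma S_sym K g f : {subset K <= J} -> ip (S K g) f = ip g (S K f).
Proof.
move=> KJ.
have gen : forall c, Re (c * ip (S K g) f) = Re (c * ip g (S K f)).
  move=> c; rewrite (ipC Hip (S K f) g) ReJ2.
  apply: (rconv_uniq (lim_sum K g f c KJ)).
  apply: rconv_ext (lim_sum K f g c^* KJ) => n; apply: eq_bigr => j jK.
  by rewrite (t_sym _ _ _ (KJ _ jK)) ReJJ.
apply: c_eq; first by have := gen 1; rewrite !mul1r.
by rewrite !Im_as_Re gen.
Qed.

Lemma split_sum (I : {pred int}) (F : int -> R) n : {subset I <= J} ->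
  \sum_(j <- zwin n | j \in I) F j +
  \sum_(j <- zwin n | j \in [pred j | (j \in J) && (j \notin I)]) F j =
  \sum_(j <- zwin n | j \in J) F j.
Proof.
move=> IJ; rewrite [X in X + _]big_mkcond [X in _ + X]big_mkcond [RHS]big_mkcond.
rewrite -big_split /=; apply: eq_bigr => j _; rewrite !inE.
case: (boolP (j \in I)) => jI; first by rewrite (IJ _ jI) /= addr0.
by rewrite add0r andbT.
Qed.

Lemma final (I : {pred int}) : {subset I <= J} ->
  let Ic : {pred int} := [pred j | (j \in J) && (j \notin I)] in
  (op_le ip (fun _ => 0) (fun f => S I f - S I (S I f))
   /\ op_le ip (fun f => S I f - S I (S I f)) (fun f => 4%:R^-1 *: f))
  /\
  (op_le ip (fun f => 2%:R^-1 *: f) (fun f => S I (S I f) + S Ic (S Ic f))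
   /\ op_le ip (fun f => S I (S I f) + S Ic (S Ic f)) (fun f => (3%:R / 2%:R) *: f)).
Proof.
move=> IJ Ic.
have IcJ : {subset Ic <= J} by move=> j; rewrite inE => /andP[].
have e4 : (4%:R^-1 : R[i]) = (4%:R^-1 : R)%:C by rewrite fmorphV rmorph_nat.
have e2 : (2%:R^-1 : R[i]) = (2%:R^-1 : R)%:C by rewrite fmorphV rmorph_nat.
have e32 : (3%:R / 2%:R : R[i]) = (3%:R / 2%:R : R)%:C by rewrite fmorph_div !rmorph_nat.
have sumf : forall f, rip ip (S I f) f + rip ip (S Ic f) f = nr ip f.
  move=> f; apply: (rconv_uniq (rconvD (S_rip I f IJ) (S_rip Ic f IcJ))).
  apply: rconv_ext (parseval f) => n; rewrite /pf; symmetry; exact: split_sum.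
split; split => f /=.
- rewrite (ip0l Hip) (ipBl Hip) (S_sym I (S I f) f IJ) (ipxx Hip) (S_real I f IJ).
  by rewrite -rmorphB ler0c subr_ge0; exact: S_nr.
- rewrite (ipBl Hip) (S_sym I (S I f) f IJ) (ipxx Hip) (S_real I f IJ) (ipZl Hip) (ipxx Hip).
  rewrite e4 -rmorphB -rmorphM lecR.
  have h1 := CS Hip (S I f) f.
  have := hnorm_sq Hip (S I f); have := hnorm_sq Hip f.
  have := hnorm_ge0 ip (S I f); have := hnorm_ge0 ip f.
  move: h1; move: (rip ip _ _) (hnorm ip (S I f)) (hnorm ip f) (nr ip (S I f)) (nr ip f).
  move=> a b c d e h1 h2 h3 <- <-; have := sqr_ge0 (c - 2%:R * b); nra.
- rewrite (ipZl Hip) (ipDl Hip) (S_sym I (S I f) f IJ) (S_sym Ic (S Ic f) f IcJ) !(ipxx Hip).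
  rewrite e2 -rmorphD -rmorphM lecR.
  have h1 := CS Hip (S I f) f; have h2 := CS Hip (S Ic f) f.
  have := hnorm_sq Hip (S I f); have := hnorm_sq Hip f; have := hnorm_sq Hip (S Ic f).
  have := hnorm_ge0 ip (S I f); have := hnorm_ge0 ip f; have := hnorm_ge0 ip (S Ic f).
  have := sumf f.
  move: h1 h2; move: (rip ip (S I f) f) (rip ip (S Ic f) f) (hnorm ip (S I f)) (hnorm ip f)
    (hnorm ip (S Ic f)) (nr ip (S I f)) (nr ip f) (nr ip (S Ic f)).
  move=> a a' x F x' nx nF nx' h1 h2 s g1 g2 g3 q1 q2 q3.
  move: s; rewrite -q1 -q2 -q3 => s.
  have := sqr_ge0 (x - x').
  case: (lerP F (x + x')) => hc.
    have : F * F <= (x + x') * (x + x') by apply: ler_pM.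
    nra.
  have Fp : 0 < F by apply: le_lt_trans hc; rewrite addr_ge0.
  have : (x + x') * F < F * F by rewrite ltr_pM2r.
  nra.
- rewrite (ipZl Hip) (ipDl Hip) (S_sym I (S I f) f IJ) (S_sym Ic (S Ic f) f IcJ) !(ipxx Hip).
  rewrite e32 -rmorphD -rmorphM lecR.
  have := S_nr I f IJ; have := S_nr Ic f IcJ; have := sumf f; have := nr_ge0 Hip f.
  move: (rip ip (S I f) f) (rip ip (S Ic f) f) (nr ip (S I f)) (nr ip f) (nr ip (S Ic f)).
  move=> *; lra.
Qed.
End Frame.

Close Scope complex_scope.
Theorem theorem3p4 (R : realType)
  (H : lmodType R[i]) (ip : H -> H -> R[i])
  (HH : is_hilbert ip) (Hsep : separable ip)
  (J : {pred int})
  (Hj : int -> lmodType R[i]) (ipj : forall j, Hj j -> Hj j -> R[i])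
  (HHj : forall j, j \in J -> is_hilbert (ipj j) /\ separable (ipj j))
  (Lam : forall j, {linear H -> Hj j})
  (Hbd : forall j, j \in J -> bounded ip (ipj j) (Lam j))
  (Lams : forall j, Hj j -> H)
  (Hadj : forall j, j \in J -> is_adjoint ip (ipj j) (Lam j) (Lams j))
  (W : int -> H -> Prop)
  (HW : forall j, j \in J -> closed_subspace ip (W j))
  (P : int -> H -> H)
  (HP : forall j, j \in J -> is_orth_proj ip (W j) (P j))
  (v : int -> R) (Hv : forall j, j \in J -> 0 < v j)
  (Hframe : parseval_gfusion ip J ipj Lam P v)
  (I : {pred int}) (HIJ : {subset I <= J}) :
  let S (K : {pred int}) := S_op ip Lam Lams P v K in
  let Ic : {pred int} := [pred j | (j \in J) && (j \notin I)] in
  (op_le ip (fun _ => 0) (fun f => S I f - S I (S I f))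
   /\ op_le ip (fun f => S I f - S I (S I f)) (fun f => 4%:R^-1 *: f))
  /\
  (op_le ip (fun f => 2%:R^-1 *: f) (fun f => S I (S I f) + S Ic (S Ic f))
   /\ op_le ip (fun f => S I (S I f) + S Ic (S Ic f)) (fun f => (3%:R / 2%:R) *: f)).
Proof.
move=> S Ic.
have HHj' : forall j, j \in J -> is_inner_product (ipj j) := fun j jJ => (HHj j jJ).1.1.
exact: (@final R H ip HH.1 HH.2 J Hj ipj HHj' (fun j => Lam j) Lams Hadj W P HP v Hframe I HIJ).
Qed.
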